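(* Let $\Omega=\{z\in\mathbb C^{r\times(r+b)}: I_r-zz^*>0\}$ be the type-I domain of rank $r$ and fix $1\le q<r$. Let $\Omega'=\{z'\in\mathbb C^{(r-q)\times(r-q+b)}: I_{r-q}-z'z'^*>0\}$ (type-I of rank $r-q$). For $z\in\mathbb C^{r\times(r+b)}$ with singular values $t_1\ge\dots\ge t_r\ge0$, let $\Psi(z)\in\mathbb C^{(r-q)\times(r-q+b)}$ be the matrix whose $(j,j)$ entry is $t_{q+j}$ for $1\le j\le r-q$ and all other entries $0$. Let $\overline{\partial\Omega_q}=\{z\in\mathbb C^{r\times(r+b)}: t_1=\dots=t_q=1\ge t_{q+1}\}$, the closure of the $q$-th boundary component $\partial\Omega_q=\{z: t_1=\dots=t_q=1>t_{q+1}\}$. Then \[\overline{\partial\Omega_q}=\Big\{z\in\mathbb C^{r\times(r+b)}:\ \Delta^{(\ell)}_\Omega(z,z)=\sum_{i=\max(\ell-(r-q),0)}^{\min(q,\ell)}\binom{q}{i}\Delta^{(\ell-i)}_{\Omega'}\big(\Psi(z),\Psi(z)\big)\ \text{ for all }1\le\ell\le r\Big\}.\]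
   Context: For a type-I domain $\Omega_n=\{z\in\mathbb C^{n\times m}: I_n-zz^*>0\}$ of rank $n$, the Jordan triple determinant is $\Delta(z,w)=\det(I_n-zw^* )$; it satisfies $\Delta(z,z)=\prod_{j=1}^n(1-t_j^2)$ where $t_j$ are the singular values of $z$. Write $\Delta(z,w)=\sum_{\ell=0}^n(-1)^\ell\Delta^{(\ell)}(z,w)$ with $\Delta^{(\ell)}$ sesqui-analytic and homogeneous of bidegree $(\ell,\ell)$; $\Delta^{(0)}=1$. The subscripts $\Omega$, $\Omega'$ indicate which domain's $\Delta^{(\ell)}$ is meant ($\Delta^{(\ell-i)}_{\Omega'}$ with $0\le\ell-i\le r-q$). The boundary $\partial\Omega_q$ equals the orbit description $\{k(e_1+\dots+e_q+\sum_{i>q}t_ie_i)\}$ with $e_i$ the matrix units $E_{ii}$ and $k$ in the stabilizer of $0$ in the identity component of $\mathrm{Aut}(\Omega)$, $1>t_{q+1}\ge\dots\ge t_r\ge0$. *)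

(* Defs.v *)
From HB Require Import structures.
From mathcomp Require Import all_boot all_order all_algebra.
From mathcomp Require Import reals.
From mathcomp Require Import complex.
Set Implicit Arguments. Unset Strict Implicit. Unset Printing Implicit Defensive.
Import Order.TTheory GRing.Theory Num.Theory.
Local Open Scope ring_scope.
Local Open Scope complex_scope.

Definition adjmx (R : realType) (m n : nat) (w : 'M[R[i]]_(m, n)) : 'M[R[i]]_(n, m) :=
  (map_mx (@Num.conj _) w)^T.

(* Jordan triple determinant Delta(z,w) = det(I_m - z w^* ) and its homogeneous
   components: Delta(z,w) = \sum_l (-1)^l Delta^(l)(z,w), where Delta^(l) is
   homogeneous of bidegree (l,l).  Equivalently det(I - s z w^* ) =
   \sum_l (-1)^l s^l Delta^(l)(z,w), so Delta^(l) is (-1)^l times the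
   coefficient of s^l in the polynomial s |-> det(I - s z w^* ). *)
Definition Delta_l (R : realType) (m n : nat) (l : nat) (z w : 'M[R[i]]_(m, n)) : R[i] :=
  (-1) ^+ l *
  (\det (1%:M - 'X *: map_mx (@polyC _) (z *m adjmx w)) : {poly R[i]})`_l.

(* t (0-indexed: t 0 >= t 1 >= ... >= t (m-1) >= 0) is the list of singular
   values of z : the t j^2 are the eigenvalues of z z^*, with multiplicity. *)
Definition singular_values (R : realType) (m n : nat) (z : 'M[R[i]]_(m, n))
    (t : nat -> R) : Prop :=
  [/\ forall j, (j < m)%N -> 0 <= t j,
      forall j, (j.+1 < m)%N -> t j.+1 <= t j &
      char_poly (z *m adjmx z) = \prod_(j < m) ('X - ((t j ^+ 2)%:C)%:P)].

(* Psi(z) : the (r-q) x (r-q+b) matrix with (j,j) entry t_{q+j} (1-indexed),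
   i.e. t (q + j) 0-indexed, and zeros elsewhere. *)
Definition Psi (R : realType) (r q b : nat) (t : nat -> R) : 'M[R[i]]_(r - q, r - q + b) :=
  \matrix_(i < r - q, j < r - q + b)
     (if nat_of_ord i == nat_of_ord j then (t (q + i)%N)%:C else 0).

Definition in_closure_bdry_q (R : realType) (q : nat) (t : nat -> R) : Prop :=
  (forall j, (j < q)%N -> t j = 1) /\ t q <= 1.

(* Main.v *)
Require Import Defs.
From HB Require Import structures.
From mathcomp Require Import all_boot all_order all_algebra.
From mathcomp Require Import reals.
From mathcomp Require Import complex.
From mathcomp Require Import zify.
Import Order.TTheory GRing.Theory Num.Theory.
Local Open Scope ring_scope.
Section P. Variable F : fieldType.
Definition G n (a : nat -> F) : {poly F} := \prod_(j < n) (1 - (a j)%:P * 'X).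

Lemma coef_lin (p : {poly F}) (c : F) k : (p * (1 - c%:P * 'X))`_k = p`_k - c * (if k == 0%N then 0 else p`_k.-1).
Proof.
by rewrite mulrBr mulr1 coefB mulrCA coefCM coefMX.
Qed.

Lemma G_S n a : G n.+1 a = G n a * (1 - (a n)%:P * 'X).
Proof. by rewrite /G big_ord_recr. Qed.

Lemma G_coef0 n a : (G n a)`_0 = 1.
Proof. elim: n => [|n IH]; first by rewrite /G big_ord0 coef1. by rewrite G_S coef_lin IH /= mulr0 subr0. Qed.

Lemma G_size n a : (size (G n a) <= n.+1)%N.
Proof.
elim: n => [|n IH]; first by rewrite /G big_ord0 size_poly1.
rewrite G_S; apply: (leq_trans (size_polyMleq _ _)).
have h2 : (size (1 - (a n)%:P * 'X)%R <= 2)%N.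
  apply: (leq_trans (size_polyD _ _)); rewrite size_poly1 size_polyN geq_max /=.
  by apply: (leq_trans (size_polyMleq _ _)); rewrite size_polyX; case: (size _) (size_polyC_leq1 (a n)) => [|[|]].
move: IH h2; set x := size _; set y := size _; lia.
Qed.

Lemma G_coef_big n a k : (n < k)%N -> (G n a)`_k = 0.
Proof. move=> h; apply: nth_default; exact: leq_trans (G_size n a) h. Qed.

Lemma G_coef1 n a : (G n a)`_1 = - \sum_(j < n) a j.
Proof.
elim: n => [|n IH]; first by rewrite /G big_ord0 coef1 big_ord0 oppr0.
by rewrite G_S coef_lin IH /= G_coef0 big_ord_recr /= mulr1 opprD.
Qed.

Lemma G_coef_one n k : (G n (fun _ => 1))`_k = (-1) ^+ k * 'C(n, k)%:R.
Proof.
elim: n k => [|n IH] k.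
  rewrite /G big_ord0 coef1; case: k => [|k]; first by rewrite expr0 mulr1.
  by rewrite bin0n mulr0.
rewrite G_S coef_lin mul1r IH; case: k => [|k] /=.
  by rewrite !bin0 subr0.
by rewrite IH binS natrD mulrDr exprS mulN1r !mulNr.
Qed.
End P.
Arguments G {F} n a.
Arguments G_S {F}.
Arguments G_coef0 {F}.
Arguments G_size {F}.
Arguments G_coef_big {F}.
Arguments G_coef1 {F}.
Arguments G_coef_one {F}.
Lemma poly_eq0_nz (C : numFieldType) (p : {poly C}) :
  (forall s, s != 0 -> p.[s] = 0) -> p = 0.
Proof.
move=> H; apply/eqP; apply/negPn/negP => pn0.
have : (size [seq (i.+1)%:R : C | i <- iota 0 (size p)] < size p)%N.
  apply: (max_poly_roots pn0).
  apply/allP => x /mapP [i _ ->]; apply/eqP; apply: H; by rewrite pnatr_eq0.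
  by rewrite map_inj_uniq ?iota_uniq // => i j /eqP; rewrite eqr_nat => /eqP [].
by rewrite size_map size_iota ltnn.
Qed.

Lemma det_rev (C : numFieldType) n (A : 'M[C]_n) (lam : nat -> C) :
  char_poly A = \prod_(j < n) ('X - (lam j)%:P) ->
  \det (1%:M - 'X *: map_mx polyC A) = G n lam.
Proof.
move=> hc; apply/eqP; rewrite -subr_eq0; apply/eqP; apply: poly_eq0_nz => s s0.
rewrite hornerD hornerN; apply/eqP; rewrite subr_eq0; apply/eqP.
have -> : (\det (1%:M - 'X *: map_mx polyC A)).[s] = \det (1%:M - s *: A).
  rewrite -[X in X = _]/(horner_eval s _) -det_map_mx; congr (\det _).
  by apply/matrixP => i j; rewrite !mxE rmorphB rmorphM rmorph_nat /= /horner_eval hornerX hornerC.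
have -> : 1%:M - s *: A = s *: (s^-1%:M - A).
  by rewrite scalerBr scale_scalar_mx mulfV.
rewrite detZ.
have -> : \det (s^-1%:M - A) = (char_poly A).[s^-1].
  rewrite /char_poly -[X in _ = X]/(horner_eval s^-1 _) -det_map_mx; congr (\det _).
  by apply/matrixP => i j; rewrite !mxE rmorphB rmorphMn /= /horner_eval hornerX hornerC.
rewrite hc /G !horner_prod; have -> : s ^+ n = \prod_(j < n) s by rewrite prodr_const card_ord.
rewrite -big_split /=.
by apply: eq_bigr => j _; rewrite !hornerE mulrBr mulfV // mulrC.
Qed.
Local Open Scope complex_scope.
Lemma conjC_real (R : realType) (x : R) : Num.conj (x%:C) = x%:C.
Proof. apply/eqP; rewrite eq_complex /= oppr0 !eqxx //. Qed.

Lemma Delta_z (R : realType) m n (z : 'M[R[i]]_(m,n)) (t : nat -> R) :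
  char_poly (z *m adjmx z) = \prod_(j < m) ('X - ((t j ^+ 2)%:C)%:P) ->
  forall l, Delta_l l z z = (-1) ^+ l * (G m (fun j => (t j ^+ 2)%:C))`_l.
Proof. move=> h l; rewrite /Delta_l; congr (_ * _). exact (congr1 (fun p : {poly R[i]} => p`_l) (@det_rev _ _ _ _ h)). Qed.

Lemma Psi_adj (R : realType) r q b (t : nat -> R) :
  Psi r q b t *m adjmx (Psi r q b t) = diag_mx (\row_(i < r - q) ((t (q + i)%N ^+ 2)%:C)).
Proof.
apply/matrixP => i k; rewrite !mxE.
rewrite (bigD1 (lshift b i)) //= big1 ?addr0.
  rewrite !mxE /= eqxx; case: (eqVneq k i) => [->|ne].
    by rewrite eqxx mulr1n conjC_real rmorphXn expr2.
  have -> : (nat_of_ord k == nat_of_ord i) = false by apply/negbTE; rewrite (inj_eq val_inj).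
  by rewrite mulr0n conjC0 mulr0.
move=> j /negbTE nj; rewrite !mxE.
case: eqVneq => [eij|_]; last by rewrite mul0r.
by exfalso; move: nj; rewrite -(inj_eq val_inj) /= eij eqxx.
Qed.

Lemma Delta_Psi (R : realType) r q b (t : nat -> R) l :
  Delta_l l (Psi r q b t) (Psi r q b t) = (-1) ^+ l * (G (r - q) (fun j => (t (q + j)%N ^+ 2)%:C))`_l.
Proof.
apply: Delta_z; rewrite Psi_adj char_poly_trig ?diag_mx_is_trig //.
by apply: eq_bigr => j _; rewrite !mxE eqxx mulr1n.
Qed.

Lemma G_split (F : fieldType) n m (a : nat -> F) : G (n + m) a = G n a * G m (fun j => a (n + j)%N).
Proof. by rewrite /G big_split_ord. Qed.

Lemma sum_ident (F : fieldType) (r q l : nat) (Q : {poly F}) :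
  (forall k, (r - q < k)%N -> Q`_k = 0) -> (l <= r)%N ->
  \sum_(maxn (l - (r - q)) 0 <= i < (minn q l).+1) 'C(q, i)%:R * ((-1) ^+ (l - i) * Q`_(l - i))
  = (-1) ^+ l * (G q (fun _ => 1) * Q)`_l.
Proof.
move=> hQ hl.
rewrite coefM mulr_sumr -(big_mkord xpredT (fun i => (-1) ^+ l * ((G q (fun=> 1))`_i * Q`_(l - i)))).
rewrite maxn0.
have h1 : (0 <= l - (r - q))%N by [].
have h2 : (l - (r - q) <= (minn q l).+1)%N by lia.
have h3 : ((minn q l).+1 <= l.+1)%N by lia.
rewrite [X in _ = X](big_cat_nat (n := l - (r - q))) //; last exact: leq_trans h2 h3.
rewrite [X in _ = _ + X](big_cat_nat (n := (minn q l).+1) h2 h3) /=.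
rewrite [X in _ = X + _]big1_seq ?add0r; last first.
  move=> i /andP [_]; rewrite mem_index_iota => /andP [hi1 hi2].
  by rewrite hQ ?mulr0 //; lia.
rewrite [X in _ = _ + X]big1_seq ?addr0; last first.
  move=> i /andP [_]; rewrite mem_index_iota => /andP [hi1 hi2].
  by rewrite G_coef_one bin_small ?(mulr0, mul0r) //; lia.
apply: eq_big_seq => i; rewrite mem_index_iota => /andP [hi1 hi2].
have hil : (i <= l)%N by lia.
have -> : (-1) ^+ l = (-1) ^+ (l - i) * (-1) ^+ i :> F by rewrite -exprD subnK.
rewrite G_coef_one.
have s2 : (-1) ^+ i * (-1) ^+ i = 1 :> F by rewrite -exprMn mulrNN mulr1 expr1n.
by rewrite -!mulrA [(-1) ^+ i * (_ * _)]mulrA s2 mul1r mulrCA.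
Qed.

Theorem theoremA2 (R : realType) (r b q : nat) (hq1 : (1 <= q)%N) (hqr : (q < r)%N)
    (z : 'M[R[i]]_(r, r + b)) (t : nat -> R) (ht : singular_values z t) :
  in_closure_bdry_q q t <->
  (forall l : nat, (1 <= l <= r)%N ->
     Delta_l l z z =
     \sum_(maxn (l - (r - q)) 0 <= i < (minn q l).+1)
        'C(q, i)%:R * Delta_l (l - i) (Psi r q b t) (Psi r q b t)).
Proof.
case: ht => ht0 htd hch.
set a : nat -> R[i] := fun j => (t j ^+ 2)%:C.
set Q := G (r - q) (fun j => a (q + j)%N).
set E : {poly R[i]} := G q (fun _ => 1).
have hP l : Delta_l l z z = (-1) ^+ l * (G r a)`_l by exact: Delta_z hch l.
have hQ l : Delta_l l (Psi r q b t) (Psi r q b t) = (-1) ^+ l * Q`_l by exact: Delta_Psi.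
have hsplit : G r a = G q a * Q by rewrite /Q -{1}(subnKC (ltnW hqr)) G_split.
have hQbig k : (r - q < k)%N -> Q`_k = 0 by exact: G_coef_big.
have key l : (l <= r)%N -> \sum_(maxn (l - (r - q)) 0 <= i < (minn q l).+1)
        'C(q, i)%:R * Delta_l (l - i) (Psi r q b t) (Psi r q b t) = (-1) ^+ l * (E * Q)`_l.
  move=> hl; rewrite -(@sum_ident _ _ _ _ _ hQbig hl); apply: eq_bigr => i _; by rewrite hQ.
split.
  case=> h1 _ l /andP [_ hl].
  have hGE : G q a = E by apply: eq_bigr => j _; rewrite /a h1 // expr1n rmorph1.
  by rewrite hP key // hsplit hGE.
move=> H.
have hPE : G r a = E * Q.
  apply/polyP => l.
  have [->|l0] := eqVneq l 0%N; first by rewrite coef0M !G_coef0 mulr1.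
  have [hl|hl] := leqP l r.
    have hl1 : (1 <= l <= r)%N by rewrite hl andbT lt0n.
    have e := H l hl1; rewrite hP key // in e.
    exact: (can_inj (signrMK l)).
  rewrite G_coef_big // nth_default //.
  apply: leq_trans (size_polyMleq E Q) _.
  move: (G_size q (fun _ : nat => (1 : R[i]))) (G_size (r - q) (fun j => a (q + j)%N)).
  rewrite -/E -/Q; move: (size E) (size Q) => x y h1 h2; lia.
have Qn0 : Q != 0.
  apply/eqP=> Q0; have := G_coef0 (r - q) (fun j => a (q + j)%N).
  by rewrite -/Q Q0 coef0 => /esym/eqP; rewrite oner_eq0.
have hGE : G q a = E by apply: (mulIf Qn0); rewrite -hsplit.
have cinj (x y : R) : x%:C = y%:C -> x = y.
  by move/eqP; rewrite eq_complex /= => /andP [/eqP ->].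
have hsum : \sum_(j < q) t j ^+ 2 = q%:R.
  have := G_coef1 q a; rewrite hGE /E G_coef1 => /eqP; rewrite eqr_opp => /eqP.
  rewrite sumr_const card_ord /a -rmorph_sum -(rmorph_nat (real_complex R)).
  by move=> e; symmetry; apply: cinj; rewrite e.
have h01 k : (k < q)%N -> t k ^+ 2 = 0 \/ t k ^+ 2 = 1.
  move=> hk; have [ak0|ak0] := eqVneq (a k) 0.
    by left; apply: cinj; rewrite -/(a k) ak0.
  right; apply: cinj; rewrite rmorph1 -/(a k).
  have := congr1 (fun p => p.[(a k)^-1]) hGE; rewrite /= /E /G !horner_prod.
  rewrite (bigD1 (Ordinal hk)) //= !hornerE mulfV // subrr mul0r.
  have hx : 1 - (a k)^-1 == 0 -> a k = 1 by rewrite subr_eq0 eq_sym invr_eq1 => /eqP.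
  by move/esym/eqP; rewrite prodr_const card_ord expf_eq0 hq1 => /hx.
have h1 j : (j < q)%N -> t j = 1.
  move=> hj.
  have hz : \sum_(i < q) (1 - t i ^+ 2) = 0 by rewrite sumrB hsum sumr_const card_ord subrr.
  have hnn : forall i : 'I_q, xpredT i -> 0 <= 1 - t i ^+ 2.
    move=> i _; case: (h01 i (ltn_ord i)) => ->; by rewrite ?subr0 ?subrr.
  have := @psumr_eq0P _ _ xpredT (fun i : 'I_q => 1 - t i ^+ 2) hnn hz (Ordinal hj) isT.
  move=> /= /eqP; rewrite subr_eq0 eq_sym pexpr_eq1 ?ht0 //; last lia.
  by move/eqP.
split => //.
have := htd q.-1; rewrite prednK // => /(_ hqr); rewrite (h1 q.-1) //; lia.
Qed.
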